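(* Let $\alpha>1$ and $n\ge0$ an integer. (1) $K_\alpha(x;n)$ is a rational function of $x$, smooth on $[0,+\infty)$, with $K_\alpha(x;n)=O(x)$ as $x\to0^+$ and $K_\alpha(x;n)=O(x^{-1})$ as $x\to+\infty$. (2) $K_\alpha(\frac{x}{y};n)=(-1)^nK_\alpha(\frac{y}{x};n)$ for all $x,y>0$. (3) There is a constant $C_n>0$ (depending on $n$ and $\alpha$) such that for all $x,y>0$: $\sup_{x>0}|K_\alpha(x;n)|\le C_n$; $\sup_{y>0}\left|\frac1yK_\alpha(\frac xy;n)\right|\le C_nx^{-1}$; $\sup_{y>0}\left|\frac{d}{dy}\left[\frac1yK_\alpha(\frac xy;n)\right]\right|\le C_nx^{-2}$; $\sup_{x>0}\left|\frac{d}{dy}\left[\frac1yK_\alpha(\frac xy;n)\right]\right|\le C_ny^{-2}$.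
   Context: $K_\alpha(x)=\frac{\sin(\frac{2\pi}{1+\alpha})}{\pi}\frac{x}{1+x^2-2x\cos(\frac{2\pi}{1+\alpha})}$, $D_x=x\frac{d}{dx}$, and $K_\alpha(x;n)=D_x^nK_\alpha(x)$ (with $D_x^0$ the identity). *)

(* Defs.v *)
From Stdlib Require Import Reals Lra List.
From Coquelicot Require Import Coquelicot.
Open Scope R_scope.

Definition Kalpha (alpha : R) (x : R) : R :=
  sin (2 * PI / (1 + alpha)) / PI
  * (x / (1 + x ^ 2 - 2 * x * cos (2 * PI / (1 + alpha)))).

Definition Dx (f : R -> R) : R -> R := fun x => x * Derive f x.

Fixpoint Kn (alpha : R) (n : nat) : R -> R :=
  match n with
  | O => Kalpha alpha
  | S m => Dx (Kn alpha m)
  end.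

(* Polynomials as coefficient lists (constant term first), Horner evaluation. *)
Definition peval (p : list R) (x : R) : R :=
  fold_right (fun a acc => a + x * acc) 0 p.

(* Main.v *)
Require Import Defs.
From Stdlib Require Import Reals Lra List.
From Coquelicot Require Import Coquelicot.
Open Scope R_scope.

Definition Qf (c x : R) : R := 1 + x ^ 2 - 2 * x * c.

Lemma Qf_pos c x : -1 < c < 1 -> 0 < Qf c x.
Proof. intros. unfold Qf. assert (0 <= (x - c)^2) by (apply pow2_ge_0). nra. Qed.

Inductive G (c : R) : (R -> R) -> Prop :=
| G_const a : G c (fun _ => a)
| G_id : G c (fun x => x)
| G_invQ : G c (fun x => / Qf c x)
| G_plus f g : G c f -> G c g -> G c (fun x => f x + g x)
| G_mult f g : G c f -> G c g -> G c (fun x => f x * g x)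
| G_ext f g : (forall x, f x = g x) -> G c f -> G c g.

Lemma G_der c f : -1 < c < 1 -> G c f ->
  exists f', G c f' /\ forall x, is_derive f x (f' x).
Proof.
intros Hc H; induction H.
- exists (fun _ => 0); split; [constructor|]. intros; auto_derive; auto; ring.
- exists (fun _ => 1); split; [constructor|]. intros; auto_derive; auto; ring.
- exists (fun x => (2*c + (-2) * x) * (/ Qf c x * / Qf c x)); split.
  + apply (G_mult c (fun x => 2*c + (-2)*x) (fun x => / Qf c x * / Qf c x)).
    * apply (G_plus c (fun _ => 2*c) (fun x => (-2)*x)); [constructor|].
      apply (G_mult c (fun _ => -2) (fun x => x)); constructor.
    * apply (G_mult c (fun x => / Qf c x) (fun x => / Qf c x)); constructor.
  + intro x. pose proof (Qf_pos c x Hc). unfold Qf in *. auto_derive.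
    * lra.
    * field. lra.
- destruct IHG1 as [f' [Hf' Df]]. destruct IHG2 as [g' [Hg' Dg]].
  exists (fun x => f' x + g' x); split; [now constructor|].
  intro x; apply (is_derive_plus f g x); auto.
- destruct IHG1 as [f' [Hf' Df]]. destruct IHG2 as [g' [Hg' Dg]].
  exists (fun x => f' x * g x + f x * g' x); split.
  + apply (G_plus c (fun x => f' x * g x) (fun x => f x * g' x)); now constructor.
  + intro x. apply (is_derive_mult f g x); auto. intros; apply Rmult_comm.
- destruct IHG as [f' [Hf' Df]]. exists f'; split; auto.
  intro x; apply (is_derive_ext f g); auto.
Qed.

Lemma G_ex_derive c f x : -1 < c < 1 -> G c f -> ex_derive f x.
Proof. intros Hc H. destruct (G_der c f Hc H) as [f' [_ D]]. eexists; apply D. Qed.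

Lemma G_Derive c f : -1 < c < 1 -> G c f -> G c (Derive f).
Proof.
intros Hc H. destruct (G_der c f Hc H) as [f' [Hf D]].
apply (G_ext c f'); auto. intro x; symmetry; apply is_derive_unique, D.
Qed.

Lemma G_Derive_n c f k : -1 < c < 1 -> G c f -> G c (Derive_n f k).
Proof.
intros Hc H; induction k; simpl.
- apply (G_ext c f); auto.
- apply (G_Derive c _ Hc IHk).
Qed.

Lemma G_ex_derive_n c f k x : -1 < c < 1 -> G c f -> ex_derive_n f k x.
Proof.
intros Hc H; destruct k; simpl; auto.
apply (G_ex_derive c); auto. apply G_Derive_n; auto.
Qed.

Lemma G_bound c f a b : -1 < c < 1 -> G c f -> a <= b ->
  exists M, 0 < M /\ forall x, a <= x <= b -> Rabs (f x) <= M.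
Proof.
intros Hc H Hab.
destruct (continuity_ab_maj (fun x => Rabs (f x)) a b Hab) as [m [Hm _]].
- intros y _. apply (continuity_pt_comp f Rabs).
  + apply continuity_pt_filterlim. apply (ex_derive_continuous (K:=R_AbsRing) (V:=R_NormedModule)).
    apply (G_ex_derive c); auto.
  + apply Rcontinuity_abs.
- exists (Rabs (f m) + 1). split. pose proof (Rabs_pos (f m)); lra.
  intros x Hx. specialize (Hm x Hx). simpl in Hm. lra.
Qed.

Fixpoint padd (p q : list R) : list R :=
  match p, q with
  | nil, q => q
  | p, nil => p
  | a :: p', b :: q' => (a + b) :: padd p' q'
  end.

Lemma padd_ok p q x : peval (padd p q) x = peval p x + peval q x.
Proof.
revert q; induction p as [|a p IH]; intros q; simpl.
- ring.
- destruct q as [|b q]; simpl. ring. rewrite IH. ring.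
Qed.

Fixpoint pmul (p q : list R) : list R :=
  match p with
  | nil => nil
  | a :: p' => padd (map (Rmult a) q) (0 :: pmul p' q)
  end.

Lemma pscale_ok a q x : peval (map (Rmult a) q) x = a * peval q x.
Proof. induction q as [|b q IH]; simpl. ring. rewrite IH. ring. Qed.

Lemma pmul_ok p q x : peval (pmul p q) x = peval p x * peval q x.
Proof.
induction p as [|a p IH]; simpl. ring.
rewrite padd_ok, pscale_ok. simpl. rewrite IH. ring.
Qed.

Lemma G_rat c f : -1 < c < 1 -> G c f ->
  exists P Q : list R, forall x, peval Q x <> 0 /\ f x = peval P x / peval Q x.
Proof.
intros Hc H; induction H.
- exists (a :: nil), (1 :: nil). intro x; simpl; split. lra. field.
- exists (0 :: 1 :: nil), (1 :: nil). intro x; simpl; split. lra. field.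
- exists (1 :: nil), (1 :: -2*c :: 1 :: nil). intro x; pose proof (Qf_pos c x Hc).
  unfold Qf in *; simpl; split. nra. field. nra.
- destruct IHG1 as [P1 [Q1 H1]]. destruct IHG2 as [P2 [Q2 H2]].
  exists (padd (pmul P1 Q2) (pmul P2 Q1)), (pmul Q1 Q2). intro x.
  destruct (H1 x) as [N1 E1]. destruct (H2 x) as [N2 E2].
  rewrite padd_ok, !pmul_ok, E1, E2. split. now apply Rmult_integral_contrapositive.
  field; auto.
- destruct IHG1 as [P1 [Q1 H1]]. destruct IHG2 as [P2 [Q2 H2]].
  exists (pmul P1 P2), (pmul Q1 Q2). intro x.
  destruct (H1 x) as [N1 E1]. destruct (H2 x) as [N2 E2].
  rewrite !pmul_ok, E1, E2. split. now apply Rmult_integral_contrapositive.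
  field; auto.
- destruct IHG as [P [Q E]]. exists P, Q. intro x. rewrite <- H. apply E.
Qed.
From Stdlib Require Import Reals Lra List.
From Coquelicot Require Import Coquelicot.
Open Scope R_scope.

Lemma c_bounds alpha : 1 < alpha ->
  -1 < cos (2 * PI / (1 + alpha)) < 1 /\ 0 < sin (2 * PI / (1 + alpha)).
Proof.
intros Ha. pose proof PI_RGT_0.
assert (0 < 2 * PI / (1 + alpha) < PI).
{ split. apply Rdiv_lt_0_compat; lra.
  apply Rmult_lt_reg_r with (1 + alpha). lra.
  unfold Rdiv. rewrite Rmult_assoc, Rinv_l by lra. nra. }
assert (Hs : 0 < sin (2 * PI / (1 + alpha))) by (apply sin_gt_0; lra).
pose proof (sin2_cos2 (2 * PI / (1 + alpha))). unfold Rsqr in *.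
split; [|exact Hs]. nra.
Qed.

Lemma Kn_G alpha n : 1 < alpha -> G (cos (2 * PI / (1 + alpha))) (Kn alpha n).
Proof.
intros Ha. destruct (c_bounds alpha Ha) as [Hc _].
induction n as [|n IH]; simpl.
- apply (G_ext _ (fun x => sin (2 * PI / (1 + alpha)) / PI * (x * / Qf (cos (2 * PI / (1 + alpha))) x))).
  + intro x; reflexivity.
  + apply (G_mult _ (fun _ => _) (fun x => x * / Qf _ x)); [constructor|].
    apply (G_mult _ (fun x => x) (fun x => / Qf _ x)); constructor.
- change (G (cos (2 * PI / (1 + alpha))) (fun x => x * Derive (Kn alpha n) x)). apply (G_mult _ (fun x => x) (Derive (Kn alpha n))). constructor.
  apply G_Derive; auto.
Qed.

Lemma Kn_fact alpha n : 1 < alpha -> exists g, G (cos (2 * PI / (1 + alpha))) g /\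
  forall x, Kn alpha n x = x * g x.
Proof.
intros Ha. destruct (c_bounds alpha Ha) as [Hc _].
destruct n as [|n]; simpl.
- exists (fun x => sin (2 * PI / (1 + alpha)) / PI * / Qf (cos (2 * PI / (1 + alpha))) x).
  split.
  + apply (G_mult _ (fun _ => _) (fun x => / Qf _ x)); constructor.
  + intro x. unfold Kalpha, Qf, Rdiv. ring.
- exists (Derive (Kn alpha n)). split. apply G_Derive; auto. apply Kn_G; auto.
  intro; reflexivity.
Qed.

Lemma Kn_sym alpha n : 1 < alpha -> forall x, 0 < x ->
  Kn alpha n (/ x) = (-1) ^ n * Kn alpha n x.
Proof.
intros Ha. destruct (c_bounds alpha Ha) as [Hc _].
induction n as [|n IH]; intros x Hx; simpl.
- unfold Kalpha. pose proof (Qf_pos _ x Hc). pose proof (Qf_pos _ (/x) Hc).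
  unfold Qf in *. field. pose proof PI_RGT_0. split; [lra|split; lra].
- unfold Defs.Dx.
  assert (Hd : ex_derive (Kn alpha n) x).
  { apply (G_ex_derive (cos (2 * PI / (1 + alpha)))); auto. apply Kn_G; auto. }
  assert (Hdi : ex_derive (Kn alpha n) (/x)).
  { apply (G_ex_derive (cos (2 * PI / (1 + alpha)))); auto. apply Kn_G; auto. }
  assert (H1 : is_derive (fun t => Kn alpha n (/ t)) x (Derive (Kn alpha n) (/x) * (- / x ^ 2))).
  { auto_derive. split; auto. lra.
    replace (Derive (fun x0 => Kn alpha n x0) (/x)) with (Derive (Kn alpha n) (/x)) by reflexivity. field. lra. }
  assert (H2 : is_derive (fun t => (-1) ^ n * Kn alpha n t) x ((-1) ^ n * Derive (Kn alpha n) x)).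
  { auto_derive. auto.
    replace (Derive (fun x0 => Kn alpha n x0) x) with (Derive (Kn alpha n) x) by reflexivity. ring. }
  assert (H3 : is_derive (fun t => (-1) ^ n * Kn alpha n t) x (Derive (Kn alpha n) (/x) * (- / x ^ 2))).
  { apply (is_derive_ext_loc (fun t => Kn alpha n (/ t))); auto.
    exists (mkposreal (x/2) ltac:(lra)). intros t Ht.
    apply IH. unfold ball in Ht; simpl in Ht. unfold AbsRing_ball, abs, minus, plus, opp in Ht; simpl in Ht.
    apply Rabs_lt_between in Ht. lra. }
  apply is_derive_unique in H2. apply is_derive_unique in H3. rewrite H2 in H3.
  assert (E : Derive (Kn alpha n) (/x) = - x ^ 2 * ((-1) ^ n * Derive (Kn alpha n) x)).
  { rewrite H3. field. lra. }
  rewrite E. field. lra.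
Qed.
From Stdlib Require Import Reals Lra List.
From Coquelicot Require Import Coquelicot.
Open Scope R_scope.

Lemma core (K KS g g' : R -> R) (A B sgn : R) : Rabs sgn = 1 ->
  (forall t, 0 < t -> K t = sgn * K (/t)) ->
  (forall t, 0 < t -> KS t = - sgn * KS (/t)) ->
  (forall t, K t = t * g t) -> (forall t, KS t = t * (g t + t * g' t)) ->
  (forall t, 0 <= t <= 1 -> Rabs (g t) <= A) ->
  (forall t, 0 <= t <= 1 -> Rabs (g' t) <= B) -> 0 < A -> 0 < B ->
  forall t, 0 < t -> Rabs (K t) <= 2*A+B /\ Rabs (t * K t) <= 2*A+B /\
    Rabs (K t + KS t) <= 2*A+B /\ t^2 * Rabs (K t + KS t) <= 2*A+B.
Proof.
intros Hs HK HKS Eg Eg' Ha Hb A0 B0 t Ht.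
assert (small : forall u, 0 < u <= 1 -> Rabs (K u) <= A /\ Rabs (K u + KS u) <= 2*A+B
   /\ Rabs (u * K u) <= A /\ Rabs (K u - KS u) <= u^2 * B).
{ intros u Hu. specialize (Ha u ltac:(lra)). specialize (Hb u ltac:(lra)).
  pose proof (Rabs_pos (g u)). pose proof (Rabs_pos (g' u)).
  rewrite !Eg, !Eg'.
  replace (u * g u - u * (g u + u * g' u)) with (- (u^2 * g' u)) by ring.
  rewrite Rabs_Ropp, !Rabs_mult, (Rabs_pos_eq u), (Rabs_pos_eq (u^2)) by (try apply pow2_ge_0; lra).
  split; [nra|]. split.
  - replace (u * g u + u * (g u + u * g' u)) with (2 * u * g u + u * u * g' u) by ring.
    eapply Rle_trans; [apply Rabs_triang|]. rewrite !Rabs_mult, Rabs_pos_eq by lra.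
    rewrite (Rabs_pos_eq u) by lra.
    assert (u * Rabs (g u) <= A) by nra. assert (u * u <= 1) by nra.
    assert (u * u * Rabs (g' u) <= B) by nra. lra.
  - assert (u * Rabs (g u) <= A) by nra. split; [nra|].
    apply Rmult_le_compat_l; [apply pow2_ge_0|lra]. }
destruct (Rle_lt_dec t 1) as [Hle|Hgt].
- destruct (small t ltac:(lra)) as [S1 [S2 [S3 _]]].
  pose proof (Rabs_pos (K t + KS t)).
  assert (t ^ 2 <= 1) by nra.
  repeat split; try lra. apply Rle_trans with (1 * Rabs (K t + KS t)); [|lra].
  apply Rmult_le_compat_r; lra.
- assert (Hu : 0 < / t <= 1).
  { split. apply Rinv_0_lt_compat; lra. rewrite <- Rinv_1. apply Rlt_le, Rinv_lt_contravar; lra. }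
  destruct (small (/t) Hu) as [S1 [S2 [_ S4]]].
  assert (Hg := Ha (/t) ltac:(lra)).
  rewrite (HK t Ht), (HKS t Ht).
  replace (sgn * K (/ t) + - sgn * KS (/ t)) with (sgn * (K (/t) - KS (/t))) by ring.
  rewrite !Rabs_mult, Hs, (Rabs_pos_eq t) by lra.
  assert (E1 : t * (1 * Rabs (K (/ t))) = Rabs (g (/t))).
  { rewrite Eg, Rabs_mult, (Rabs_pos_eq (/t)) by lra. field; lra. }
  pose proof (Rabs_pos (K (/ t) - KS (/ t))).
  assert (E2 : t ^ 2 * (/ t) ^ 2 = 1) by (field; lra).
  assert ((/t)^2 <= 1) by nra.
  assert ((/t)^2 * B <= B) by nra.
  rewrite E1, !Rmult_1_l. repeat split; try lra.
  apply Rle_trans with (t^2 * ((/t)^2 * B)).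
  apply Rmult_le_compat_l. apply pow2_ge_0. lra.
  rewrite <- Rmult_assoc, E2. lra.
Qed.
From Stdlib Require Import Reals Lra List.
From Coquelicot Require Import Coquelicot.
Open Scope R_scope.

Lemma Kn_sym' alpha m : 1 < alpha -> forall t, 0 < t ->
  Kn alpha m t = (-1) ^ m * Kn alpha m (/ t).
Proof.
intros Ha t Ht. rewrite <- (Kn_sym alpha m Ha (/t)) by (apply Rinv_0_lt_compat; lra).
rewrite Rinv_inv; reflexivity.
Qed.

Theorem lemma3p2 (alpha : R) (n : nat) (halpha : 1 < alpha) :
  (* (1) rational function, smooth on [0,+oo), O(x) at 0+, O(1/x) at +oo *)
  ((exists P Q : list R, forall x : R,
        peval Q x <> 0 /\ Kn alpha n x = peval P x / peval Q x)
   /\ (forall (k : nat) (x : R), 0 <= x -> ex_derive_n (Kn alpha n) k x)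
   /\ (exists C delta : R, 0 < delta /\
         forall x : R, 0 < x < delta -> Rabs (Kn alpha n x) <= C * x)
   /\ (exists C M : R,
         forall x : R, M < x -> Rabs (Kn alpha n x) <= C / x))
  (* (2) symmetry *)
  /\ (forall x y : R, 0 < x -> 0 < y ->
        Kn alpha n (x / y) = (-1) ^ n * Kn alpha n (y / x))
  (* (3) uniform bounds *)
  /\ (exists Cn : R, 0 < Cn /\
        forall x y : R, 0 < x -> 0 < y ->
          Rabs (Kn alpha n x) <= Cn
          /\ Rabs (/ y * Kn alpha n (x / y)) <= Cn / x
          /\ Rabs (Derive (fun t => / t * Kn alpha n (x / t)) y) <= Cn / x ^ 2
          /\ Rabs (Derive (fun t => / t * Kn alpha n (x / t)) y) <= Cn / y ^ 2).
Proof.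
destruct (c_bounds alpha halpha) as [Hc Hs].
pose proof (Kn_G alpha n halpha) as HG.
destruct (Kn_fact alpha n halpha) as [g [Hg Eg]].
destruct (G_bound _ g 0 1 Hc Hg) as [A [A0 HA]]; [lra|].
destruct (G_bound _ (Derive g) 0 1 Hc (G_Derive _ g Hc Hg)) as [B [B0 HB]]; [lra|].
assert (EgS : forall t, Kn alpha (S n) t = t * (g t + t * Derive g t)).
{ intro t. change (Kn alpha (S n) t) with (t * Derive (Kn alpha n) t).
  f_equal. rewrite (Derive_ext _ (fun x => x * g x) t Eg).
  apply is_derive_unique. assert (ex_derive g t) by (apply (G_ex_derive _ g t Hc Hg)).
  auto_derive; auto.
  replace (Derive (fun x0 => g x0) t) with (Derive g t) by reflexivity. ring. }
assert (Hcore := core (Kn alpha n) (Kn alpha (S n)) g (Derive g) A B ((-1)^n)).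
assert (Hsg : Rabs ((-1)^n) = 1).
{ rewrite <- RPow_abs. replace (Rabs (-1)) with 1. apply pow1. unfold Rabs; destruct Rcase_abs; lra. }
specialize (Hcore Hsg (Kn_sym' alpha n halpha)).
assert (HS : forall t, 0 < t -> Kn alpha (S n) t = - (-1)^n * Kn alpha (S n) (/t)).
{ intros t Ht. rewrite (Kn_sym' alpha (S n) halpha t Ht). simpl. ring. }
specialize (Hcore HS Eg EgS HA HB A0 B0).
split; [split; [|split; [|split]]|split].
- apply (G_rat _ _ Hc HG).
- intros k x _. apply (G_ex_derive_n _ _ k x Hc HG).
- exists A, 1. split; [lra|]. intros x Hx. rewrite Eg, Rabs_mult, (Rabs_pos_eq x) by lra.
  specialize (HA x ltac:(lra)). nra.
- exists A, 1. intros x Hx. rewrite (Kn_sym' alpha n halpha x) by lra.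
  rewrite Eg, !Rabs_mult, Hsg, (Rabs_pos_eq (/x)) by (apply Rlt_le, Rinv_0_lt_compat; lra).
  assert (0 < / x <= 1).
  { split. apply Rinv_0_lt_compat; lra. rewrite <- Rinv_1. apply Rlt_le, Rinv_lt_contravar; lra. }
  specialize (HA (/x) ltac:(lra)). unfold Rdiv. rewrite Rmult_comm. nra.
- intros x y Hx Hy. rewrite (Kn_sym' alpha n halpha (x/y)).
  + replace (/ (x / y)) with (y / x) by (field; lra). reflexivity.
  + apply Rdiv_lt_0_compat; lra.
- exists (2*A+B). split; [lra|]. intros x y Hx Hy.
  assert (Hxy : 0 < x / y) by (apply Rdiv_lt_0_compat; lra).
  destruct (Hcore x Hx) as [C1 _].
  destruct (Hcore (x/y) Hxy) as [_ [C2 [C3 C4]]].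
  assert (DF : Derive (fun t => / t * Kn alpha n (x / t)) y =
     - / y ^ 2 * (Kn alpha n (x / y) + Kn alpha (S n) (x / y))).
  { apply is_derive_unique.
    assert (ex_derive (Kn alpha n) (x / y)) by (apply (G_ex_derive _ _ _ Hc HG)).
    auto_derive.
    - repeat split; auto; lra.
    - change (Kn alpha (S n) (x/y)) with ((x/y) * Derive (Kn alpha n) (x/y)).
      replace (x * / y) with (x / y) by reflexivity. replace (Derive (fun x0 => Kn alpha n x0) (x / y)) with (Derive (Kn alpha n) (x/y)) by reflexivity.
      field. lra. }
  rewrite DF. rewrite (Rabs_mult (- / y ^ 2)), Rabs_Ropp.
  assert (Py : 0 < / y ^ 2) by (apply Rinv_0_lt_compat; apply pow_lt; lra).
  assert (Px : 0 < / x ^ 2) by (apply Rinv_0_lt_compat; apply pow_lt; lra).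
  rewrite (Rabs_pos_eq (/ y ^ 2)) by lra.
  split; [lra|split; [|split]].
  + replace (/ y * Kn alpha n (x / y)) with (/ x * (x / y * Kn alpha n (x / y))) by (field; lra).
    rewrite Rabs_mult, (Rabs_pos_eq (/x)) by (apply Rlt_le, Rinv_0_lt_compat; lra).
    apply Rle_trans with (/ x * (2*A+B)); [|right; unfold Rdiv; ring].
    apply Rmult_le_compat_l; [|exact C2].
    apply Rlt_le, Rinv_0_lt_compat; lra.
  + replace (/ y ^ 2) with (/ x ^ 2 * (x / y) ^ 2) by (field; lra).
    rewrite Rmult_assoc.
    apply Rle_trans with (/ x ^ 2 * (2*A+B)); [|right; unfold Rdiv; ring].
    apply Rmult_le_compat_l; lra.
  + apply Rle_trans with (/ y ^ 2 * (2*A+B)); [|right; unfold Rdiv; ring].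
    apply Rmult_le_compat_l; lra.
Qed.
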